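(* For every collection $\mathcal D_1$ of pairwise disjoint dyadic strips in $\mathcal D$, $\mu(\bigcup_{D\in\mathcal D_1}D)=\sum_{D\in\mathcal D_1}\mu(D)=\sum_{D\in\mathcal D_1}|\pi(D)|$. For every collection $\mathcal T_1$ of pairwise disjoint dyadic trees in $\mathcal T$, $\nu(\bigcup_{T\in\mathcal T_1}T)=\sum_{T\in\mathcal T_1}\nu(T)=\sum_{T\in\mathcal T_1}|\pi(T)|$. Moreover, for every collection $\mathcal D_1$ of pairwise disjoint strips in $\mathcal D$ and every tree $T\in\mathcal T$, $\nu(T\cap\bigcup_{D\in\mathcal D_1}D)=\sum_{D\in\mathcal D_1}\nu(T\cap D)$.
   Context: $\pi$ is the projection onto the first coordinate and $|\cdot|$ Lebesgue measure. Dyadic intervals: $I(m,l)=(2^lm,2^l(m+1)]$. Tiles: $H(m,l,n)=I(m,l)\times(2^{l-1},2^l]\times I(n,-l)$. Strips $D(m,l)=I(m,l)\times(0,2^l]\times\mathbb R$ form $\mathcal D$, with $\sigma(D(m,l))=2^l$. Trees $T(m,l,n)=\bigcup_{l'\le l}\bigcup_{m':\,I(m',l')\subseteq I(m,l)}H(m',l',N(n,l'))$, with $N(n,l')$ the integer such that $I(n,-l)\subseteq I(N(n,l'),-l')$, form $\mathcal T$, with $\tau(T(m,l,n))=2^l$. On $X=\mathbb R\times(0,\infty)\times\mathbb R$, $\mu(A)=\inf\{\sum_{S\in\mathcal S'}\sigma(S):\mathcal S'\subseteq\mathcal D,\ A\subseteq\bigcup\mathcal S'\}$ and $\nu(A)=\inf\{\sum_{S\in\mathcal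 S'}\tau(S):\mathcal S'\subseteq\mathcal T,\ A\subseteq\bigcup\mathcal S'\}$. *)

(* Defs.v *)
From mathcomp Require Import all_boot all_order all_algebra.
From mathcomp Require Import all_classical all_reals all_analysis.
Import Order.TTheory GRing.Theory Num.Theory.
Local Open Scope classical_set_scope.
Local Open Scope ring_scope.

Section Dyadic.
Variable R : realType.

(* Points of X = R x (0,oo) x R are represented in R * R * R; all sets
   considered (strips, tiles, trees) lie inside X. *)
Definition pt := (R * R * R)%type.

Definition proj1 (p : pt) : R := p.1.1.

Definition dyI (m l : int) : set R :=
  [set x | (2%:R ^ l) * m%:~R < x /\ x <= (2%:R ^ l) * (m + 1)%:~R].

Definition tile (m l n : int) : set pt :=
  [set p | dyI m l p.1.1 /\
           (2%:R ^ (l - 1) < p.1.2 /\ p.1.2 <= 2%:R ^ l) /\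
           dyI n (- l) p.2].

Definition strip (m l : int) : set pt :=
  [set p | dyI m l p.1.1 /\ (0 < p.1.2 /\ p.1.2 <= 2%:R ^ l)].

Definition tree (m l n : int) : set pt :=
  [set p | exists l' m' N : int,
     [/\ (l' <= l)%R, dyI m' l' `<=` dyI m l, dyI n (- l) `<=` dyI N (- l')
       & tile m' l' N p]].

Definition strips : set (set pt) := [set strip ml.1 ml.2 | ml in setT].
Definition trees : set (set pt) := [set tree j.1.1 j.1.2 j.2 | j in setT].

Local Open Scope ereal_scope.

Definition mu (A : set pt) : \bar R :=
  ereal_inf [set s | exists J : set (int * int),
     A `<=` \bigcup_(j in J) strip j.1 j.2 /\
     s = (\esum_(j in J) ((2%:R ^ j.2 : R)%:E))%R].

Definition nu (A : set pt) : \bar R :=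
  ereal_inf [set s | exists J : set (int * int * int),
     A `<=` \bigcup_(j in J) tree j.1.1 j.1.2 j.2 /\
     s = (\esum_(j in J) ((2%:R ^ j.1.2 : R)%:E))%R].

Definition len_proj (A : set pt) : \bar R := lebesgue_measure (proj1 @` A).

Definition pairwise_disjoint (C : set (set pt)) : Prop :=
  forall A B, C A -> C B -> A <> B -> A `&` B = set0.

End Dyadic.

Arguments mu {R} A.
Arguments nu {R} A.
Arguments len_proj {R} A.
Arguments pairwise_disjoint {R} C.

(* Main.v *)
Require Import Defs.
From mathcomp Require Import all_boot all_order all_algebra.
From mathcomp Require Import all_classical all_reals all_analysis.
From mathcomp Require Import zify.
Import Order.TTheory GRing.Theory Num.Theory.
Local Open Scope classical_set_scope.
Local Open Scope ring_scope.

Section Geo.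
Variable R : realType.
Implicit Types (a b m n : int) (k l : int).

Lemma c_gt0 l : 0 < (2%:R ^ l : R).
Proof. by apply: exprz_gt0; rewrite ltr0Sn. Qed.

Lemma c_add l (n : nat) : (2%:R ^ (l + n%:Z) : R) = 2%:R ^ l * 2%:R ^+ n.
Proof. by rewrite expfzDr ?pnatr_eq0. Qed.

Lemma le_exists l l' : l <= l' -> exists n : nat, l' = l + n%:Z.
Proof. move=> h; exists `|l' - l|%N; rewrite gez0_abs; lia. Qed.

Lemma c_le l l' : l <= l' -> (2%:R ^ l : R) <= 2%:R ^ l'.
Proof.
move=> /le_exists [n ->]; rewrite c_add ler_pMr ?c_gt0//.
by apply: exprn_ege1; rewrite ler1n.
Qed.

Lemma c_lt l l' : l < l' -> (2%:R ^ l : R) < 2%:R ^ l'.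
Proof.
move=> h; have [n e] : exists n : nat, l' = l + n%:Z by apply: le_exists; lia.
rewrite e c_add ltr_pMr ?c_gt0// exprn_egt1 ?ltr1n//.
apply/eqP => n0; move: e; rewrite n0; lia.
Qed.

Lemma c_leW l l' : (2%:R ^ l : R) <= 2%:R ^ l' -> l <= l'.
Proof.
move=> h; case: (lerP l l') => // /c_lt h'.
by have := lt_le_trans h' h; rewrite ltxx.
Qed.

Lemma c_ltW l l' : (2%:R ^ l : R) < 2%:R ^ l' -> l < l'.
Proof.
move=> h; case: (ltrP l l') => // /c_le h'.
by have := lt_le_trans h h'; rewrite ltxx.
Qed.

Lemma c_height l l' : (2%:R ^ (l' - 1) : R) < 2%:R ^ l -> (2%:R ^ l : R) <= 2%:R ^ l' -> l = l'.
Proof.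
move=> h1 /c_leW h2.
case: (lerP l (l' - 1)) => [/c_le h3|h3]; last by lia.
by have := lt_le_trans h1 h3; rewrite ltxx.
Qed.

Lemma c_half l : (2%:R ^ (l - 1) : R) < 2%:R ^ l.
Proof. by apply: c_lt; lia. Qed.

Lemma dyI_right a k : dyI R a k (2%:R ^ k * (a + 1)%:~R).
Proof.
split => //; rewrite ltr_pM2l ?c_gt0// ltr_int; lia.
Qed.

Lemma dyI_exists x k : exists a, dyI R a k x.
Proof.
exists (Num.ceil (x / 2%:R ^ k) - 1); split.
  rewrite -ltr_pdivlMl ?c_gt0// mulrC; exact: ceilB1_lt.
rewrite -ler_pdivrMl ?c_gt0// mulrC subrK; exact: ceil_ge.
Qed.

Lemma dyI_nest a b k k' x : k <= k' -> dyI R a k x -> dyI R b k' x ->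
  dyI R a k `<=` dyI R b k'.
Proof.
move=> /le_exists [n ->]; rewrite /dyI /= c_add.
set C := (2%:R ^ k : R); have C0 : 0 < C by apply: c_gt0.
have -> : (2%:R ^+ n : R) = (2%:Z ^+ n)%:~R by rewrite rmorphXn.
set q := (2%:Z ^+ n).
move=> -[h1 h2] [h3 h4] y [h5 h6].
have e1 : a < q * (b + 1).
  rewrite -(ltr_int R) -(ltr_pM2l C0) rmorphM /= mulrA.
  exact: lt_le_trans h1 h4.
have e2 : q * b < a + 1.
  rewrite -(ltr_int R) -(ltr_pM2l C0) rmorphM /= mulrA.
  exact: lt_le_trans h3 h2.
have e1' : a + 1 <= q * (b + 1) by lia.
have e2' : q * b <= a by lia.
split.
  apply: le_lt_trans h5; rewrite -mulrA ler_pM2l // -rmorphM /= ler_int //.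
apply: (le_trans h6); rewrite -mulrA ler_pM2l // -rmorphM /= ler_int //.
Qed.

Lemma dyI_meet a b k k' : dyI R a k `&` dyI R b k' !=set0 ->
  dyI R a k `<=` dyI R b k' \/ dyI R b k' `<=` dyI R a k.
Proof.
move=> [x [h1 h2]]; case: (lerP k k') => h.
  by left; apply: dyI_nest h1 h2.
by right; exact: (@dyI_nest _ _ _ _ _ (ltW h) h2 h1).
Qed.

Lemma dyI_itv a k : dyI R a k = [set` `]2%:R ^ k * a%:~R, 2%:R ^ k * (a + 1)%:~R]].
Proof. by apply/seteqP; split => x /=; rewrite in_itv /= => /andP. Qed.

Lemma dyI_meas a k : measurable (dyI R a k).
Proof. by rewrite dyI_itv; exact: measurable_itv. Qed.

Lemma dyI_len a k : lebesgue_measure (dyI R a k) = ((2%:R ^ k : R))%:E.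
Proof.
rewrite dyI_itv lebesgue_measure_itv /= lte_fin ltr_pM2l ?c_gt0// ltr_int.
rewrite ifT; last lia.
by rewrite -EFinD rmorphD /= mulrDr addrAC subrr add0r mulr1.
Qed.

End Geo.
Arguments c_gt0 {R} l.
Arguments c_add {R} l n.
Arguments c_le {R l l'}.
Arguments c_lt {R l l'}.
Arguments c_leW {R l l'}.
Arguments c_ltW {R l l'}.
Arguments c_height {R l l'}.
Arguments c_half {R} l.
Arguments dyI_right {R} a k.
Arguments dyI_exists {R} x k.
Arguments dyI_nest {R a b k k' x}.
Arguments dyI_meet {R a b k k'}.
Arguments dyI_meas {R} a k.
Arguments dyI_len {R} a k.

Section Gen.
Variables (R : realType) (L : choiceType) (l0 : L) (S : L -> set (pt R))
  (w : L -> R) (X : L -> set R) (t : L -> pt R).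
Hypothesis Htop : forall k, S k (t k).
Hypothesis Hsub : forall k j, S j (t k) -> X k `<=` X j.
Hypothesis Hmeet : forall k k' j, S j (t k) -> S j (t k') ->
  X k `&` X k' !=set0 -> S k `&` S k' !=set0.
Hypothesis Hproj : forall k, Defs.proj1 R @` S k = X k.
Hypothesis Hmeas : forall k, measurable (X k).
Hypothesis Hlen : forall k, lebesgue_measure (X k) = (w k)%:E.

Local Open Scope ereal_scope.

Definition nuG (A : set (pt R)) : \bar R :=
  ereal_inf [set s | exists J : set L,
     A `<=` \bigcup_(j in J) S j /\ s = (\esum_(j in J) (w j)%:E)%R].

Lemma w_ge0 k : (0 <= w k)%R.
Proof. by rewrite -lee_fin -Hlen measure_ge0. Qed.

Lemma nuG_le A J : A `<=` \bigcup_(j in J) S j -> nuG A <= \esum_(j in J) (w j)%:E.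
Proof. by move=> h; apply: ereal_inf_lbound; exists J. Qed.

Lemma nuG_ge0 A : 0 <= nuG A.
Proof.
apply/ereal_infP => _ [J [_ ->]]; apply: esum_ge0 => k _; rewrite lee_fin; exact: w_ge0.
Qed.

Lemma nuG0 : nuG set0 = 0.
Proof.
apply/le_anti/andP; split; last exact: nuG_ge0.
by rewrite -(esum_set0 (fun j => (w j)%:E)); apply: nuG_le.
Qed.

Lemma w_le_esum k J : S k `<=` \bigcup_(j in J) S j ->
  (w k)%:E <= \esum_(j in J) (w j)%:E.
Proof.
move=> /(_ _ (Htop k)) [j Jj Sj].
apply: esum_ge; exists [set j].
  by split; [exact: finite_set1| move=> x ->].
rewrite fsbig_set1 -!Hlen; apply: le_measure; rewrite ?inE; [exact: Hmeas..|].
exact: Hsub.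
Qed.

Lemma nuG_S k : nuG (S k) = (w k)%:E.
Proof.
apply/le_anti/andP; split.
  rewrite -(@esum_set1 _ _ k (fun j => (w j)%:E)) ?lee_fin ?w_ge0//.
  by apply: nuG_le => x Sx; exists k.
by apply/ereal_infP => _ [J [h ->]]; apply: w_le_esum.
Qed.

Lemma pack_aux (g : set (pt R) -> set (pt R)) (s : seq (set (pt R))) j :
  uniq s ->
  (forall D D', D \in s -> D' \in s -> D <> D' -> g D `&` g D' = set0) ->
  (forall D, D \in s -> exists k, g D = S k /\ S j (t k)) ->
  [/\ \sum_(D <- s) nuG (g D) =
        lebesgue_measure (\big[setU/set0]_(D <- s) (Defs.proj1 R @` g D)),
      measurable (\big[setU/set0]_(D <- s) (Defs.proj1 R @` g D)) &
      \big[setU/set0]_(D <- s) (Defs.proj1 R @` g D) `<=` X j].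
Proof.
elim: s => [|a s IH] /=.
  by move=> _ _ _; rewrite !big_nil measure0; split.
move=> /andP[as_ us] hd hw.
have [||e m sub] := IH us.
- by move=> D D' Ds D's; apply: hd; rewrite inE ?Ds ?D's orbT.
- by move=> D Ds; apply: hw; rewrite inE Ds orbT.
have [k [gk Sjk]] := hw a (mem_head _ _).
rewrite !big_cons gk Hproj; split.
- have dis : X k `&` \big[setU/set0]_(D <- s) (Defs.proj1 R @` g D) = set0.
    rewrite -bigcup_seq; apply/seteqP; split => // x [xk [D Ds xD]].
    have {}Ds : D \in s by [].
    have Ds' : D \in a :: s by rewrite inE Ds orbT.
    have [k' [gk' Sjk']] := hw D Ds'.
    move: xD; rewrite gk' Hproj => xD.
    have [y [y1 y2]] := Hmeet _ _ _ Sjk Sjk' (ex_intro _ x (conj xk xD)).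
    have aD : a <> D by move=> aD; move: as_; rewrite aD Ds.
    have := hd a D (mem_head _ _) Ds' aD.
    rewrite gk gk' => /seteqP[/(_ y (conj y1 y2))] //.
  rewrite measureU //; last exact: Hmeas.
  by rewrite nuG_S -Hlen e.

- exact: measurableU.
- by rewrite subUset; split => //; apply: Hsub.
Qed.

Lemma pack (g : set (pt R) -> set (pt R)) (s : seq (set (pt R))) j :
  uniq s ->
  (forall D D', D \in s -> D' \in s -> D <> D' -> g D `&` g D' = set0) ->
  (forall D, D \in s -> exists k, g D = S k /\ S j (t k)) ->
  \sum_(D <- s) nuG (g D) <= (w j)%:E.
Proof.
move=> us hd hw; have [-> m sub] := pack_aux _ _ _ us hd hw.
rewrite -Hlen; apply: le_measure => //; rewrite inE //; exact: Hmeas.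
Qed.

Lemma lower_js (g : set (pt R) -> set (pt R)) (js : seq L) :
  forall s : seq (set (pt R)), uniq s ->
  (forall D D', D \in s -> D' \in s -> D <> D' -> g D `&` g D' = set0) ->
  (forall D, D \in s -> g D = set0 \/
      exists k j, [/\ g D = S k, j \in js & S j (t k)]) ->
  \sum_(D <- s) nuG (g D) <= \sum_(j <- js) (w j)%:E.
Proof.
elim: js => [|j0 js IH] s us hd hw.
  rewrite big_nil big_seq big1 // => D Ds.
  by case: (hw D Ds) => [->|[k [j [_]]]]; [exact: nuG0|rewrite in_nil].
pose P D := `[< exists k, g D = S k /\ S j0 (t k) >].
rewrite big_cons (bigID P) /= leeD //.
  rewrite -big_filter; apply: pack; first exact: filter_uniq.
    by move=> D D'; rewrite !mem_filter => /andP[_ Ds] /andP[_ D's]; apply: hd.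
  by move=> D; rewrite mem_filter => /andP[/asboolP].
rewrite -big_filter; apply: IH; first exact: filter_uniq.
  by move=> D D'; rewrite !mem_filter => /andP[_ Ds] /andP[_ D's]; apply: hd.
move=> D; rewrite mem_filter => /andP[nP Ds].
case: (hw D Ds) => [->|[k [j [gk jjs Sj]]]]; first by left.
right; exists k, j; split => //.
move: jjs; rewrite inE => /orP[/eqP ej|] //.
move/asboolPn: nP => nP; exfalso; apply: nP; exists k; split => //.
by rewrite -ej.
Qed.

Lemma js_exists (g : set (pt R) -> set (pt R)) (J : set L) (s : seq (set (pt R))) :
  (forall D, D \in s -> g D = set0 \/
      exists k j, [/\ g D = S k, J j & S j (t k)]) ->
  exists js : seq L, [/\ uniq js, forall j, j \in js -> J j &
    forall D, D \in s -> g D = set0 \/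
      exists k j, [/\ g D = S k, j \in js & S j (t k)]].
Proof.
elim: s => [|a s IH] hw.
  by exists [::]; split => // D; rewrite in_nil.
have [|js [ujs Jjs hjs]] := IH.
  by move=> D Ds; apply: hw; rewrite inE Ds orbT.
case: (hw a (mem_head _ _)) => [ga0|[k [j [gk Jj Sj]]]].
  exists js; split => // D; rewrite inE => /orP[/eqP ->|]; [by left|exact: hjs].
exists (undup (j :: js)); split.
- exact: undup_uniq.
- by move=> i; rewrite mem_undup inE => /orP[/eqP ->|]; [|exact: Jjs].
- move=> D; rewrite inE => /orP[/eqP ->|Ds].
    by right; exists k, j; split => //; rewrite mem_undup mem_head.
  case: (hjs D Ds) => [|[k' [j' [gk' j's Sj']]]]; first by left.
  by right; exists k', j'; split => //; rewrite mem_undup inE j's orbT.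
Qed.

Lemma lower (I : set (set (pt R))) (g : set (pt R) -> set (pt R)) (J : set L) :
  (forall D, I D -> g D = set0 \/ exists k, g D = S k) ->
  (forall D D', I D -> I D' -> D <> D' -> g D `&` g D' = set0) ->
  \bigcup_(D in I) g D `<=` \bigcup_(j in J) S j ->
  \esum_(D in I) nuG (g D) <= \esum_(j in J) (w j)%:E.
Proof.
move=> hI hd hc; apply: ge_ereal_sup => _ [F [finF FI] <-].
rewrite fsbig_finite //=.
set s := finmap.enum_fset _.
have sF : forall D, D \in s -> I D.
  by move=> D; rewrite /s in_fset_set // inE => /FI.
have [js [ujs Jjs hjs]] : exists js : seq L, [/\ uniq js, forall j, j \in js -> J j &
    forall D, D \in s -> g D = set0 \/
      exists k j, [/\ g D = S k, j \in js & S j (t k)]].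
  apply: js_exists => D Ds; case: (hI D (sF D Ds)) => [|[k gk]]; first by left.
  right; have [j Jj Sj] : (\bigcup_(j in J) S j) (t k).
    by apply: hc; exists D; [exact: sF|rewrite gk; exact: Htop].
  by exists k, j.
apply: (le_trans (@lower_js g js s _ _ _)).
- exact: finmap.fset_uniq.
- by move=> D D' Ds D's; apply: hd; apply: sF.
- exact: hjs.
apply: esum_ge; exists [set` js]; first by split; [exact: finite_seq|].
by rewrite fsbig_seq.
Qed.

Theorem gen (I : set (set (pt R))) (g : set (pt R) -> set (pt R)) :
  (forall D, I D -> g D = set0 \/ exists k, g D = S k) ->
  (forall D D', I D -> I D' -> D <> D' -> g D `&` g D' = set0) ->
  nuG (\bigcup_(D in I) g D) = \esum_(D in I) nuG (g D).
Proof.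
move=> hI hd; apply/le_anti/andP; split; last first.
  by apply/ereal_infP => _ [J [hc ->]]; apply: lower.
pose I' := I `&` [set D | g D != set0].
have [kof hk] : {kof : set (pt R) -> L & forall D, I' D -> g D = S (kof D)}.
  apply: (@choice _ _ (fun D k => I' D -> g D = S k)) => D; case: (pselect (I' D)) => [[ID /= gD]|nI].
    case: (hI D ID) => [g0|[k gk]]; first by rewrite g0 eqxx in gD.
    by exists k.
  by exists l0.
have inj : set_inj I' kof.
  move=> D D' /set_mem ID /set_mem ID' e; case: (pselect (D = D')) => // nD; exfalso.
  have := hd D D' ID.1 ID'.1 nD; rewrite (hk D ID) (hk D' ID') e setIid.
  by move=> h; move: ID.2; rewrite /= (hk D ID) e h eqxx.
apply: (@le_trans _ _ (\esum_(j in kof @` I') (w j)%:E)).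
  apply: nuG_le => x [D ID gx].
  have I'D : I' D.
    by split => //; apply/eqP => g0; rewrite g0 in gx.
  by exists (kof D); [exists D|rewrite -hk].
rewrite esum_image // esum_mkcond [X in _ <= X]esum_mkcond.
apply: le_esum => D _.
case: ifP => [/[!inE] I'D|_].
  rewrite ifT; last by rewrite inE; exact: I'D.1.
  by rewrite (hk D I'D) nuG_S.
by case: ifP => _ //; exact: nuG_ge0.
Qed.

End Gen.

Section Conc.
Variable R : realType.

Definition sS (j : int * int) := strip R j.1 j.2.
Definition sw (j : int * int) : R := 2%:R ^ j.2.
Definition sX (j : int * int) := dyI R j.1 j.2.
Definition st (j : int * int) : pt R :=
  ((2%:R ^ j.2 * (j.1 + 1)%:~R, 2%:R ^ j.2), 0).

Lemma s_top k : sS k (st k).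
Proof. by split; [exact: dyI_right|split; [exact: c_gt0|]]. Qed.

Lemma s_sub k j : sS j (st k) -> sX k `<=` sX j.
Proof.
move=> [hx [_ hh]]; apply: (dyI_nest (c_leW hh) _ hx); exact: dyI_right.
Qed.

Lemma s_meet k k' j : sS j (st k) -> sS j (st k') ->
  sX k `&` sX k' !=set0 -> sS k `&` sS k' !=set0.
Proof.
move=> _ _ [x [h1 h2]]; case: (lerP k.2 k'.2) => hl.
  exists (st k); split; first exact: s_top.
  split; first by apply: (dyI_nest hl h1 h2); exact: dyI_right.
  split; [exact: c_gt0| exact: (c_le hl)].
exists (st k'); split; last exact: s_top.
split; first by apply: (dyI_nest (ltW hl) h2 h1); exact: dyI_right.
split; [exact: c_gt0| exact: (c_le (ltW hl))].
Qed.

Lemma s_proj k : Defs.proj1 R @` sS k = sX k.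
Proof.
apply/seteqP; split; first by move=> _ [p [h _] <-].
move=> x hx; exists ((x, 2%:R ^ k.2), 0) => //.
by split => //; split; [exact: c_gt0|].
Qed.

Lemma s_meas k : measurable (sX k). Proof. exact: dyI_meas. Qed.
Lemma s_len k : lebesgue_measure (sX k) = (sw k)%:E. Proof. exact: dyI_len. Qed.

Definition tS (j : int * int * int) := tree R j.1.1 j.1.2 j.2.
Definition tw (j : int * int * int) : R := 2%:R ^ j.1.2.
Definition tX (j : int * int * int) := dyI R j.1.1 j.1.2.
Definition tt (j : int * int * int) : pt R :=
  ((2%:R ^ j.1.2 * (j.1.1 + 1)%:~R, 2%:R ^ j.1.2),
    2%:R ^ (- j.1.2) * (j.2 + 1)%:~R).

Lemma tile_top m l n : tile R m l n (tt (m, l, n)).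
Proof.
split; first exact: dyI_right.
split; first by split; [exact: c_half|].
exact: dyI_right.
Qed.

Lemma tree_sub_of m l n m' l' n' : l <= l' -> dyI R m l `<=` dyI R m' l' ->
  dyI R n' (- l') `<=` dyI R n (- l) -> tree R m' l' n' (tt (m, l, n)).
Proof. by move=> h1 h2 h3; exists l, m, n; split => //; exact: tile_top. Qed.

Lemma t_top k : tS k (tt k).
Proof. by case: k => [[m l] n]; apply: tree_sub_of. Qed.

Lemma top_in_tree m l n m' l' n' : tree R m' l' n' (tt (m, l, n)) ->
  [/\ l <= l', dyI R m l `<=` dyI R m' l' & dyI R n' (- l') `<=` dyI R n (- l)].
Proof.
move=> [l'' [m'' [N [hl hm hn [hx [[hh1 hh2] hz]]]]]].
have e := c_height hh1 hh2; subst l''.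
split => //.
  apply: subset_trans hm; apply: (dyI_nest (lexx _) _ hx); exact: dyI_right.
apply: (subset_trans hn); apply: (dyI_nest (lexx _) hz); exact: dyI_right.
Qed.

Lemma t_sub k j : tS j (tt k) -> tX k `<=` tX j.
Proof.
by case: k j => [[m l] n] [[m' l'] n'] /top_in_tree [].
Qed.

Lemma t_meet k k' j : tS j (tt k) -> tS j (tt k') ->
  tX k `&` tX k' !=set0 -> tS k `&` tS k' !=set0.
Proof.
case: k k' j => [[m l] n] [[m2 l2] n2] [[m' l'] n'].
move=> /top_in_tree /= [hl hm hn] /top_in_tree /= [hl2 hm2 hn2] [x [h1 h2]] /=.
have z : dyI R n' (- l') _ := dyI_right n' (- l').
case: (lerP l l2) => hll.
  exists (tt (m, l, n)); split; first exact: (t_top (m, l, n)).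
  rewrite /tS /=; apply: tree_sub_of => //; first exact: (dyI_nest hll h1 h2).
  apply: (dyI_nest _ (hn2 _ z) (hn _ z)); lia.
exists (tt (m2, l2, n2)); split; last exact: (t_top (m2, l2, n2)).
rewrite /tS /=; apply: tree_sub_of => //; first lia.
  exact: (dyI_nest (ltW hll) h2 h1).
apply: (dyI_nest _ (hn _ z) (hn2 _ z)); lia.
Qed.

Lemma tree_projsub m l n p : tree R m l n p -> dyI R m l p.1.1.
Proof. by move=> [l' [m' [N [_ hm _ [hx _]]]]]; apply: hm. Qed.

Lemma t_proj k : Defs.proj1 R @` tS k = tX k.
Proof.
case: k => [[m l] n]; apply/seteqP; split.
  by move=> _ [p hp <-]; exact: tree_projsub hp.
move=> x hx; exists ((x, 2%:R ^ l), 2%:R ^ (- l) * (n + 1)%:~R) => //.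
exists l, m, n; split => //; split => //.
split; first by split; [exact: c_half|].
exact: dyI_right.
Qed.

Lemma t_meas k : measurable (tX k). Proof. exact: dyI_meas. Qed.
Lemma t_len k : lebesgue_measure (tX k) = (tw k)%:E. Proof. exact: dyI_len. Qed.

Lemma cap_tree m l n a b : tree R m l n `&` strip R a b = set0 \/
  exists k, tree R m l n `&` strip R a b = tS k.
Proof.
case: (pselect (dyI R m l `&` dyI R a b !=set0)) => [[x0 [hx1 hx2]]|nI]; last first.
  left; apply/seteqP; split => // p [/tree_projsub h1 [h2 _]].
  by apply: nI; exists p.1.1.
right; case: (lerP l b) => hlb.
  exists (m, l, n); rewrite /tS /=; apply/setIidl => p hp.
  have [l' [m' [N [hl hm hn [hx [[hh1 hh2] hz]]]]]] := hp.
  split; first exact: (dyI_nest hlb hx1 hx2 _ (hm _ hx)).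
  split; first exact: lt_trans (c_gt0 _) hh1.
  apply: (le_trans hh2); apply: c_le; lia.
have [N hN] := dyI_exists (R:=R) (2%:R ^ (- l) * (n + 1)%:~R) (- b).
have z0 : dyI R n (- l) (2%:R ^ (- l) * (n + 1)%:~R) := dyI_right n (- l).
have nN : dyI R n (- l) `<=` dyI R N (- b).
  by apply: (dyI_nest _ z0 hN); lia.
have ab : dyI R a b `<=` dyI R m l by apply: (dyI_nest (ltW hlb) hx2 hx1).
exists (a, b, N); rewrite /tS /=; apply/seteqP; split.
  move=> p [[l' [m' [N' [hl hm hn [hx [[hh1 hh2] hz]]]]]] [hxD [h0 hhD]]].
  have lb : l' <= b.
    have := c_ltW (lt_le_trans hh1 hhD); lia.
  exists l', m', N'; split => //.
    exact: (dyI_nest lb hx hxD).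
  by apply: (dyI_nest _ (nN _ z0) (hn _ z0)); lia.
move=> p hp; have [l' [m' [N' [hl hm hn [hx [[hh1 hh2] hz]]]]]] := hp.
split.
  exists l', m', N'; split => //; first lia.
  - exact: subset_trans hm ab.
  - exact: subset_trans nN hn.
split; first exact: hm.
split; first exact: lt_trans (c_gt0 _) hh1.
exact: le_trans hh2 (c_le hl).
Qed.

End Conc.

Theorem lemma4p4 (R : realType) :
  (forall D1 : set (set (pt R)),
     D1 `<=` strips R -> pairwise_disjoint D1 ->
     mu (\bigcup_(D in D1) D) = \esum_(D in D1) mu D /\
     \esum_(D in D1) mu D = \esum_(D in D1) len_proj D) /\
  (forall T1 : set (set (pt R)),
     T1 `<=` trees R -> pairwise_disjoint T1 ->
     nu (\bigcup_(T in T1) T) = \esum_(T in T1) nu T /\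
     \esum_(T in T1) nu T = \esum_(T in T1) len_proj T) /\
  (forall (D1 : set (set (pt R))) (T : set (pt R)),
     D1 `<=` strips R -> pairwise_disjoint D1 -> trees R T ->
     nu (T `&` \bigcup_(D in D1) D) = \esum_(D in D1) nu (T `&` D)).
Proof.
have Hs := @gen R _ ((0,0) : int * int) (@sS R) (@sw R) (@sX R) (@st R)
  (@s_top R) (@s_sub R) (@s_meet R) (@s_proj R) (@s_meas R) (@s_len R).
have Ht := @gen R _ ((0,0,0) : int * int * int) (@tS R) (@tw R) (@tX R) (@tt R)
  (@t_top R) (@t_sub R) (@t_meet R) (@t_proj R) (@t_meas R) (@t_len R).
have sN := @nuG_S R _ (@sS R) (@sw R) (@sX R) (@st R)
  (@s_top R) (@s_sub R) (@s_meas R) (@s_len R).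
have tN := @nuG_S R _ (@tS R) (@tw R) (@tX R) (@tt R)
  (@t_top R) (@t_sub R) (@t_meas R) (@t_len R).
have sL : forall k, len_proj (sS R k) = (sw R k)%:E.
  by move=> k; rewrite /len_proj s_proj s_len.
have tL : forall k, len_proj (tS R k) = (tw R k)%:E.
  by move=> k; rewrite /len_proj t_proj t_len.
split.
  move=> D1 sub pd.
  have hI : forall D, D1 D -> id D = set0 \/ exists k, id D = sS R k.
    by move=> D /sub [k _ <-]; right; exists k.
  have := Hs D1 id hI pd => e1.
  split; first exact: e1.
  apply: eq_esum => D /sub [k _ <-].
  exact: (etrans (sN k) (esym (sL k))).
split.
  move=> T1 sub pd.
  have hI : forall D, T1 D -> id D = set0 \/ exists k, id D = tS R k.
    by move=> D /sub [k _ <-]; right; exists k.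
  have := Ht T1 id hI pd => e1.
  split; first exact: e1.
  apply: eq_esum => D /sub [k _ <-].
  exact: (etrans (tN k) (esym (tL k))).
move=> D1 T sub pd [[[m l] n] _ <-].
rewrite setI_bigcupr.
have hI : forall D, D1 D -> (tree R m l n `&` D) = set0 \/
    exists k, (tree R m l n `&` D) = tS R k.
  by move=> D /sub [[a b] _ <-]; apply: cap_tree.
have hd : forall D D', D1 D -> D1 D' -> D <> D' ->
    (tree R m l n `&` D) `&` (tree R m l n `&` D') = set0.
  move=> D D' hD hD' nD; apply/seteqP; split => // p [[_ h1] [_ h2]].
  by have := pd D D' hD hD' nD; move=> /seteqP [/(_ p (conj h1 h2))].
exact: (Ht D1 (fun D => tree R m l n `&` D) hI hd).
Qed.
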